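(* Let $K/k$ be a finite field extension and let $G$ be a finite group acting on $K(x_1,\ldots,x_n)$ by quasi-monomial $k$-automorphisms. Then there exists a normal subgroup $N$ of $G$ such that: (i) $K(x_1,\ldots,x_n)^N=K^N(y_1,\ldots,y_n)$, where $y_1,\ldots,y_n$ are algebraically independent over $K^N$ and each $y_i$ is of the form $a\,x_1^{e_1}x_2^{e_2}\cdots x_n^{e_n}$ with $a\in K^\times$ and $e_1,\ldots,e_n\in\mathbb{Z}$ (and one may take $a=1$ if the action of $G$ is purely quasi-monomial); (ii) $G/N$ acts on $K^N(y_1,\ldots,y_n)$ by quasi-monomial $k$-automorphisms; (iii) the homomorphism $\rho_{\underline{y}}\colon G/N\to GL_n(\mathbb{Z})$ associated to this action (with respect to $y_1,\ldots,y_n$) is injective.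
   Context: Let $K/k$ be a finite field extension and $K(x_1,\ldots,x_n)$ the rational function field over $K$. A finite subgroup $G\subset \mathrm{Aut}_k(K(x_1,\ldots,x_n))$ acts by quasi-monomial $k$-automorphisms if (i) $\sigma(K)\subset K$ for all $\sigma\in G$; (ii) $K^G=k$; (iii) for every $\sigma\in G$ and $1\le j\le n$, $\sigma(x_j)=c_j(\sigma)\prod_{i=1}^n x_i^{a_{ij}}$ with $c_j(\sigma)\in K^\times$ and $[a_{ij}]_{1\le i,j\le n}\in GL_n(\mathbb{Z})$. The action is purely quasi-monomial if moreover all $c_j(\sigma)=1$. The associated homomorphism $\rho_{\underline{x}}\colon G\to GL_n(\mathbb{Z})$ is $\rho_{\underline{x}}(\sigma)=[a_{ij}]$ where the $a_{ij}$ are as in (iii). *)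

(* Defs.v *)
From HB Require Import structures.
From mathcomp Require Import all_boot all_order all_algebra all_fingroup.
Set Implicit Arguments. Unset Strict Implicit. Unset Printing Implicit Defensive.
Import GRing.Theory Num.Theory.
Local Open Scope ring_scope.

Section QMDefs.
Variable L : fieldType.

Definition is_subfield (P : pred L) : Prop :=
  [/\ 1 \in P, {in P &, forall a b, a - b \in P},
      {in P &, forall a b, a * b \in P} & {in P, forall a, a^-1 \in P}].

Definition sub_pred (P Q : pred L) : Prop := forall a, a \in P -> a \in Q.

Definition gen_field (F : pred L) n (y : 'I_n -> L) (E : pred L) : Prop :=
  [/\ is_subfield E, sub_pred F E, (forall i, y i \in E) &
      forall P : pred L, is_subfield P -> sub_pred F P ->
        (forall i, y i \in P) -> sub_pred E P].

Definition alg_indep (F : pred L) n (y : 'I_n -> L) : Prop :=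
  forall (s : seq {ffun 'I_n -> nat}) (c : {ffun 'I_n -> nat} -> L),
    uniq s -> (forall e, e \in s -> c e \in F) ->
    \sum_(e <- s) c e * \prod_(i < n) y i ^+ e i = 0 ->
    forall e, e \in s -> c e = 0.

Definition finite_ext (k K : pred L) : Prop :=
  sub_pred k K /\
  exists b : seq L, (forall v, v \in b -> v \in K) /\
    forall a, a \in K -> exists lam : 'I_(size b) -> L,
      (forall i, lam i \in k) /\ a = \sum_(i < size b) lam i * b`_i.

Variable gT : finGroupType.

Definition fixed_field (H : {set gT}) (act : gT -> L -> L) : pred L :=
  [pred a | [forall g in H, act g a == a]].

Definition kaut_action (k : pred L) (G : {group gT}) (act : gT -> L -> L) : Prop :=
  [/\ forall g, g \in G -> [/\ forall a b, act g (a + b) = act g a + act g b,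
                              forall a b, act g (a * b) = act g a * act g b &
                              act g 1 = 1],
      forall g h a, g \in G -> h \in G -> act (g * h)%g a = act g (act h a),
      forall a, act 1%g a = a,
      forall g, g \in G -> (forall a, act g a = a) -> g = 1%g &
      forall g a, g \in G -> a \in k -> act g a = a].

Definition rho_rel (F : pred L) n (y : 'I_n -> L) (act : gT -> L -> L)
    (g : gT) (A : 'M[int]_n) : Prop :=
  forall j, exists2 c, (c \in F) && (c != 0) &
    act g (y j) = c * \prod_(i < n) y i ^ A i j.

Definition rho_rel1 n (y : 'I_n -> L) (act : gT -> L -> L)
    (g : gT) (A : 'M[int]_n) : Prop :=
  forall j, act g (y j) = \prod_(i < n) y i ^ A i j.

(* The group G, acting through act, with kernel H on E, acts on E = F(y) by
   quasi-monomial k-automorphisms (i.e. G/H embedded in Aut_k(E)). *)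
Definition qm_action (k F E : pred L) (G H : {set gT}) (act : gT -> L -> L)
    n (y : 'I_n -> L) : Prop :=
  [/\ forall g, g \in G -> forall a, a \in E -> act g a \in E,
      forall g, g \in G -> (forall a, a \in E -> act g a = a) -> g \in H,
      forall g, g \in G -> forall a, a \in F -> act g a \in F,
      forall a, a \in F -> (a \in k <-> forall g, g \in G -> act g a = a) &
      forall g, g \in G -> exists2 A : 'M[int]_n, A \in unitmx & rho_rel F y act g A].

Definition pqm_action (k F E : pred L) (G H : {set gT}) (act : gT -> L -> L)
    n (y : 'I_n -> L) : Prop :=
  qm_action k F E G H act y /\
  forall g, g \in G -> exists2 A : 'M[int]_n, A \in unitmx & rho_rel1 y act g A.

End QMDefs.

(* Main.v *)
Require Import Defs.
From HB Require Import structures.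
From mathcomp Require Import all_boot all_order all_algebra all_fingroup.
From Stdlib Require Import ClassicalEpsilon.
From mathcomp Require Import zify ring.
Import Order.TTheory GRing.Theory Num.Theory.
Local Open Scope ring_scope.


Definition pb (P : Prop) : bool := if excluded_middle_informative P then true else false.
Lemma pbP (P : Prop) : reflect P (pb P).
Proof. by rewrite /pb; case: excluded_middle_informative => h; constructor. Qed.

Section SubField.
Variables (L : fieldType) (P : pred L).
Hypothesis HP : is_subfield P.

Lemma sf1 : 1 \in P. Proof. by case: HP. Qed.
Lemma sfB a b : a \in P -> b \in P -> a - b \in P.
Proof. by case: HP => _ h _ _; apply: h. Qed.
Lemma sfM a b : a \in P -> b \in P -> a * b \in P.
Proof. by case: HP => _ _ h _; apply: h. Qed.
Lemma sfV a : a \in P -> a^-1 \in P.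
Proof. by case: HP => _ _ _ h; apply: h. Qed.
Lemma sf0 : 0 \in P. Proof. by rewrite -(subrr 1); apply: sfB; apply: sf1. Qed.
Lemma sfN a : a \in P -> - a \in P.
Proof. by move=> h; rewrite -sub0r; apply: sfB => //; apply: sf0. Qed.
Lemma sfD a b : a \in P -> b \in P -> a + b \in P.
Proof. by move=> ha hb; rewrite -(opprK b); apply: sfB => //; apply: sfN. Qed.
Lemma sfdiv a b : a \in P -> b \in P -> a / b \in P.
Proof. by move=> ha hb; apply: sfM => //; apply: sfV. Qed.
Lemma sfX a m : a \in P -> a ^+ m \in P.
Proof. by move=> ha; elim: m => [|m ih]; rewrite ?expr0 ?sf1 // exprS sfM. Qed.
Lemma sfXz a (z : int) : a \in P -> a ^ z \in P.
Proof. by move=> ha; case: z => m; rewrite /exprz; [apply: sfX | apply: sfV; apply: sfX]. Qed.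
Lemma sfMn a m : a \in P -> a *+ m \in P.
Proof. by move=> ha; elim: m => [|m ih]; rewrite ?mulr0n ?sf0 // mulrS sfD. Qed.
Lemma sf_sum (I : Type) (s : seq I) (Q : pred I) (F : I -> L) :
  (forall i, Q i -> F i \in P) -> \sum_(i <- s | Q i) F i \in P.
Proof. by move=> h; apply: (big_ind (fun v => v \in P)) => //; [apply: sf0 | apply: sfD]. Qed.
Lemma sf_prod (I : Type) (s : seq I) (Q : pred I) (F : I -> L) :
  (forall i, Q i -> F i \in P) -> \prod_(i <- s | Q i) F i \in P.
Proof. by move=> h; apply: (big_ind (fun v => v \in P)) => //; [apply: sf1 | apply: sfM]. Qed.
End SubField.

Lemma ex_min_nat (P : nat -> Prop) : (exists m, P m) -> exists m, P m /\ forall j, P j -> (m <= j)%N.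
Proof.
move=> [m Pm]; apply: NNPP => hn.
suff : forall j, forall i, (i <= j)%N -> ~ P i by move/(_ m m (leqnn m)).
elim=> [|j ih] i.
  rewrite leqn0 => /eqP -> P0; apply: hn; exists 0%N; split => // j' _.
move=> hij Pi; move: hij; rewrite leq_eqVlt => /orP [/eqP Ei | hi]; last exact: (ih i hi Pi).
apply: hn; exists i; split => // j' Pj'; rewrite leqNgt; apply/negP => hlt.
by apply: (ih j'); [rewrite -ltnS -Ei | ].
Qed.

Section Main.
Variables (L : fieldType) (k K : pred L) (n : nat) (x : 'I_n -> L)
  (gT : finGroupType) (G : {group gT}) (act : gT -> L -> L).
Hypotheses (Kf : is_subfield K) (xind : alg_indep K x) (xgen : gen_field K x predT)
  (Hact : kaut_action k G act) (Hqm : qm_action k K predT G [set 1%g] act x).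

Lemma actP {g} : g \in G -> exists f : {rmorphism L -> L}, act g = f.
Proof.
case: Hact => hom _ _ _ _ Hg; case: (hom g Hg) => fD fM f1.
have fB : forall a b, act g (a - b) = act g a - act g b.
  by move=> a b; have := fD (a - b) b; rewrite subrK => ->; rewrite addrK.
pose f : {rmorphism L -> L} := HB.pack (act g) (GRing.isZmodMorphism.Build L L (act g) fB)
   (GRing.isMonoidMorphism.Build L L (act g) (conj f1 fM)).
by exists f.
Qed.

Lemma actM g h a : g \in G -> h \in G -> act (g * h)%g a = act g (act h a).
Proof. by case: Hact => _ h1 _ _ _; apply: h1. Qed.
Lemma act1 a : act 1%g a = a.
Proof. by case: Hact. Qed.
Lemma actK g a : g \in G -> act g^-1%g (act g a) = a.
Proof. by move=> Hg; rewrite -actM ?groupV // mulVg act1. Qed.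
Lemma actVK g a : g \in G -> act g (act g^-1%g a) = a.
Proof. by move=> Hg; rewrite -actM ?groupV // mulgV act1. Qed.
Lemma act_eq0 g a : g \in G -> (act g a == 0) = (a == 0).
Proof.
move=> Hg; apply/eqP/eqP => [h|->]; last by have [f ->] := actP Hg; rewrite rmorph0.
by rewrite -(actK g a Hg) h; have [f ->] := actP (groupVr Hg); rewrite rmorph0.
Qed.
Lemma actK_in g a : g \in G -> a \in K -> act g a \in K.
Proof. by case: Hqm => _ _ h _ _ Hg Ha; exact: (h g Hg a Ha). Qed.
Lemma act_rho {g} : g \in G -> exists2 A : 'M[int]_n, A \in unitmx & rho_rel K x act g A.
Proof. by case: Hqm => _ _ _ _ h; apply: h. Qed.

Definition xm (v : 'cV[int]_n) : L := \prod_(i < n) x i ^ v i 0.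

Lemma x_neq0 i : x i != 0.
Proof.
apply/negP => /eqP x0.
pose e : {ffun 'I_n -> nat} := [ffun j => (j == i) : nat].
have := xind [:: e] (fun _ => 1) isT.
have h1 : forall e', e' \in [:: e] -> (fun _ : {ffun 'I_n -> nat} => (1 : L)) e' \in K.
  by move=> e' _; apply: sf1.
move=> /(_ h1) H; suff : (1 : L) = 0 by move/eqP; rewrite oner_eq0.
apply: (H _ e (mem_head _ _)).
rewrite big_seq1 mul1r (bigD1 i) //= big1 ?mulr1; first by rewrite ffunE eqxx x0 expr1.
by move=> j /negPf hj; rewrite ffunE hj expr0.
Qed.

Lemma xm_neq0 v : xm v != 0.
Proof. by rewrite prodf_seq_neq0; apply/allP => i _; rewrite expfz_neq0 ?x_neq0. Qed.

Lemma xm0 : xm 0 = 1.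
Proof. by rewrite /xm big1 // => i _; rewrite mxE expr0z. Qed.

Lemma xmD u v : xm (u + v) = xm u * xm v.
Proof. by rewrite /xm -big_split; apply: eq_bigr => i _; rewrite mxE expfzDr ?x_neq0. Qed.

Lemma xmN u : xm (- u) = (xm u)^-1.
Proof.
apply: (mulfI (xm_neq0 u)); rewrite -xmD subrr xm0 divff //; exact: xm_neq0.
Qed.

Lemma xmB u v : xm (u - v) = xm u / xm v.
Proof. by rewrite xmD xmN. Qed.

Lemma xm_delta j : xm (delta_mx j 0) = x j.
Proof.
rewrite /xm (bigD1 j) //= big1 ?mulr1; first by rewrite mxE !eqxx expr1z.
by move=> i /negPf hi; rewrite mxE hi expr0z.
Qed.

Lemma xm_col (A : 'M[int]_n) j : xm (col j A) = \prod_(i < n) x i ^ A i j.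
Proof. by apply: eq_bigr => i _; rewrite mxE. Qed.

Lemma prodXz (I : Type) (s : seq I) (F : I -> L) (z : int) :
  (\prod_(i <- s) F i) ^ z = \prod_(i <- s) F i ^ z.
Proof. by rewrite (big_morph (fun a => a ^ z) (fun a b => expfzMl a b z) (exp1rz L z)). Qed.

Lemma xm_mul (A : 'M[int]_n) v : xm (A *m v) = \prod_(j < n) xm (col j A) ^ v j 0.
Proof.
rewrite /xm; transitivity (\prod_(i < n) x i ^ (\sum_j A i j * v j 0)).
  by apply: eq_bigr => i _; rewrite !mxE.
transitivity (\prod_(j < n) \prod_(i < n) (x i ^ A i j) ^ v j 0); last first.
  by apply: eq_bigr => j _; rewrite prodXz; apply: eq_bigr => i _; rewrite mxE.
rewrite exchange_big /=; apply: eq_bigr => i _.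
rewrite (big_morph (fun z : int => x i ^ z) (fun a b => expfzDr a b (x_neq0 i)) (expr0z _)).
by apply: eq_bigr => j _; rewrite exprz_exp.
Qed.


Lemma act_xm g (A : 'M[int]_n) v : g \in G -> rho_rel K x act g A ->
  exists2 c, (c \in K) && (c != 0) & act g (xm v) = c * xm (A *m v).
Proof.
move=> Hg hr; have [cf hcf hcf2] := fin_all_exists2 hr.
exists (\prod_(j < n) cf j ^ v j 0).
  apply/andP; split; first by apply: sf_prod => // j _; apply: sfXz => //; by case/andP: (hcf j).
  by rewrite prodf_seq_neq0; apply/allP => j _; rewrite expfz_neq0 //; by case/andP: (hcf j).
have [f Ef] := actP Hg; rewrite xm_mul Ef [in LHS]/xm rmorph_prod -big_split /=.
apply: eq_bigr => j _; rewrite fmorphXz -Ef.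
by rewrite hcf2 expfzMl xm_col.
Qed.


Lemma LI (I : eqType) (s : seq I) (phi : I -> 'cV[int]_n) (c : I -> L) :
  uniq s -> {in s &, injective phi} -> (forall e, e \in s -> c e \in K) ->
  \sum_(e <- s) c e * xm (phi e) = 0 -> forall e, e \in s -> c e = 0.
Proof.
case: s => [|e0 s0] //; set s := e0 :: s0 => us iphi hK hs e he.
pose a e' i := absz (phi e' i 0).
pose D := (\sum_(e' <- s) \sum_(i < n) a e' i)%N.
have hD : forall e' i, e' \in s -> (a e' i <= D)%N.
  move=> e' i he'; apply: (@leq_trans (\sum_(i < n) a e' i)%N).
    by rewrite (bigD1 i) //= leq_addr.
  by rewrite /D (big_rem e' he') /= leq_addr.
pose psi (e' : I) : {ffun 'I_n -> nat} := [ffun i => absz (phi e' i 0 + D%:Z)].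
have hpsi : forall e' i, e' \in s -> (psi e' i)%:Z = phi e' i 0 + D%:Z.
  by move=> e' i he'; rewrite ffunE; have := hD e' i he'; rewrite /a; lia.
have ipsi : {in s &, injective psi}.
  move=> e1 e2 h1 h2 E; apply: iphi => //; apply/matrixP => i j; rewrite (ord1 j).
  by apply: (addIr D%:Z); rewrite -!hpsi // E.
pose X := \prod_(i < n) x i ^+ D.
have hmon : forall e', e' \in s -> \prod_(i < n) x i ^+ psi e' i = xm (phi e') * X.
  move=> e' he'; rewrite /xm -big_split /=; apply: eq_bigr => i _.
  have -> : x i ^+ psi e' i = x i ^ ((psi e' i)%:Z) by [].
  by rewrite hpsi // expfzDr ?x_neq0.
pose c' := fun f => c (nth e0 s (index f (map psi s))).
have hc' : forall e', e' \in s -> c' (psi e') = c e'.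
  by move=> e' he'; rewrite /c' nth_index_map.
have hK' : forall f, f \in map psi s -> c' f \in K.
  by move=> f /mapP [e' he' ->]; rewrite hc' //; apply: hK.
have hsum : \sum_(f <- map psi s) c' f * \prod_(i < n) x i ^+ f i = 0.
  rewrite big_map (eq_big_seq (fun e' => c e' * xm (phi e') * X)).
    by rewrite -mulr_suml hs mul0r.
  by move=> e' he'; rewrite hc' // hmon // mulrA.
have H := xind (map psi s) c'.
rewrite map_inj_in_uniq // in H.
by rewrite -hc' //; apply: (H us hK' hsum); apply: map_f.
Qed.

Lemma mon_uniq p q u v : p \in K -> q \in K -> p != 0 ->
  p * xm u = q * xm v -> u = v /\ p = q.
Proof.
move=> pK qK p0 E.
have [uv|nuv] := eqVneq u v.
  split => //; move: E; rewrite uv => /(mulIf (xm_neq0 v)) //.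
have hu : uniq [:: u; v] by rewrite /= inE nuv.
have hin : {in [:: u; v] &, injective id} by [].
have hK : forall w, w \in [:: u; v] -> (if w == u then p else - q) \in K.
  by move=> w _; case: ifP => _ //; apply: sfN.
have hsum : \sum_(w <- [:: u; v]) (if w == u then p else - q) * xm (id w) = 0.
  by rewrite big_cons big_seq1 eqxx eq_sym (negPf nuv) E mulNr subrr.
have := @LI _ _ id _ hu hin hK hsum _ (mem_head _ _); rewrite eqxx => p00.
by move: p0; rewrite p00 eqxx.
Qed.


Definition lp (v : L) := exists s : seq ('cV[int]_n * L),
  (forall q, q \in s -> q.2 \in K) /\ v = \sum_(q <- s) q.2 * xm q.1.

Lemma lp_mon c e : c \in K -> lp (c * xm e).
Proof. by move=> cK; exists [:: (e, c)]; rewrite big_seq1; split => // q; rewrite inE => /eqP ->. Qed.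
Lemma lp0 : lp 0.
Proof. by exists [::]; rewrite big_nil. Qed.
Lemma lpK c : c \in K -> lp c.
Proof. by move=> cK; rewrite -[c]mulr1 -xm0; apply: lp_mon. Qed.
Lemma lpD u v : lp u -> lp v -> lp (u + v).
Proof.
move=> [s1 [h1 ->]] [s2 [h2 ->]]; exists (s1 ++ s2); rewrite big_cat; split => // q.
by rewrite mem_cat => /orP [] ?; [apply: h1 | apply: h2].
Qed.
Lemma lpN u : lp u -> lp (- u).
Proof.
move=> [s [h ->]]; exists (map (fun q => (q.1, - q.2)) s); rewrite big_map -sumrN; split.
  by move=> q /mapP [q' hq' ->] /=; apply: sfN => //; apply: h.
by apply: eq_bigr => q _ /=; rewrite mulNr.
Qed.
Lemma lpB u v : lp u -> lp v -> lp (u - v).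
Proof. by move=> hu hv; apply: lpD => //; apply: lpN. Qed.
Lemma lp_monM c e v : c \in K -> lp v -> lp (c * xm e * v).
Proof.
move=> cK [s [h ->]]; exists (map (fun q => (q.1 + e, c * q.2)) s); rewrite big_map mulr_sumr; split.
  by move=> q /mapP [q' hq' ->] /=; apply: sfM => //; apply: h.
by apply: eq_bigr => q _ /=; rewrite xmD; ring.
Qed.
Lemma lpM u v : lp u -> lp v -> lp (u * v).
Proof.
move=> [s [h ->]] hv; elim: s h => [|q s ih] h; first by rewrite big_nil mul0r; exact: lp0.
rewrite big_cons mulrDl; apply: lpD; last by apply: ih => q' hq'; apply: h; rewrite inE hq' orbT.
by apply: lp_monM => //; apply: h; rewrite mem_head.
Qed.
Lemma lp_prod (I : Type) (s : seq I) (Q : pred I) (F : I -> L) :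
  (forall i, Q i -> lp (F i)) -> lp (\prod_(i <- s | Q i) F i).
Proof. by move=> h; apply: (big_ind lp) => //; [apply: lpK; apply: sf1 | apply: lpM]. Qed.

Lemma lp_act g v : g \in G -> lp v -> lp (act g v).
Proof.
move=> Hg [s [h ->]]; have [A _ hA] := act_rho Hg; have [f Ef] := actP Hg.
rewrite Ef rmorph_sum big_seq; apply: (big_ind lp); [exact: lp0 | exact: lpD|].
move=> q hq; rewrite rmorphM -Ef; have [c /andP [cK _] ->] := act_xm _ _ q.1 Hg hA.
by rewrite mulrA; apply: lp_mon; apply: sfM => //; apply: actK_in => //; apply: h.
Qed.

Lemma lp_regroup (s : seq ('cV[int]_n * L)) (t : seq 'cV[int]_n) :
  uniq t -> {subset map fst s <= t} ->
  \sum_(q <- s) q.2 * xm q.1 = \sum_(e <- t) (\sum_(q <- s | q.1 == e) q.2) * xm e.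
Proof.
move=> ut; elim: s => [|q s ih] hs.
  by rewrite big_nil big1 // => e _; rewrite big_nil mul0r.
rewrite big_cons ih; last by move=> e he; apply: hs; rewrite inE he orbT.
have qt : q.1 \in t by apply: hs; rewrite mem_head.
rewrite (big_rem q.1 qt) [in RHS](big_rem q.1 qt) /=.
rewrite {1}big_cons eqxx mulrDl -addrA; congr (_ + _); congr (_ + _).
rewrite big_seq [RHS]big_seq; apply: eq_bigr => e he.
have : e != q.1 by move: he; rewrite mem_rem_uniq //= inE => /andP [].
by rewrite big_cons eq_sym => /negPf ->.
Qed.

Lemma lp_uniq v : lp v -> exists t (C : 'cV[int]_n -> L),
  [/\ uniq t, forall e, C e \in K & v = \sum_(e <- t) C e * xm e].
Proof.
move=> [s [h ->]]; exists (undup (map fst s)), (fun e => \sum_(q <- s | q.1 == e) q.2).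
split; first exact: undup_uniq.
  by move=> e; rewrite big_seq_cond; apply: sf_sum => // q /andP [hq _]; apply: h.
by apply: lp_regroup; [exact: undup_uniq | move=> e; rewrite mem_undup].
Qed.

Lemma frac_all a : exists P Q, [/\ lp P, lp Q, Q != 0 & a = P / Q].
Proof.
pose S := [pred b | pb (exists P Q, [/\ lp P, lp Q, Q != 0 & b = P / Q])].
have hS : is_subfield S.
  split.
  - apply/pbP; exists 1, 1; split; rewrite ?divr1 ?oner_neq0 //; apply: lpK; exact: (@sf1 _ _ Kf).
  - move=> b c /pbP [P1 [Q1 [h1 h2 h3 ->]]] /pbP [P2 [Q2 [h1' h2' h3' ->]]].
    apply/pbP; exists (P1 * Q2 - P2 * Q1), (Q1 * Q2); split.
    + by apply: lpB; apply: lpM.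
    + by apply: lpM.
    + by rewrite mulf_neq0.
    + by field; rewrite h3 h3'.
  - move=> b c /pbP [P1 [Q1 [h1 h2 h3 ->]]] /pbP [P2 [Q2 [h1' h2' h3' ->]]].
    apply/pbP; exists (P1 * P2), (Q1 * Q2); split; try by apply: lpM.
      by rewrite mulf_neq0.
    by field; rewrite h3 h3'.
  - move=> b /pbP [P1 [Q1 [h1 h2 h3 ->]]]; apply/pbP.
    have [->|P0] := eqVneq P1 0.
      exists 0, 1; split; rewrite ?mul0r ?invr0 ?oner_neq0 //; try exact: lp0.
      by apply: lpK; exact: (@sf1 _ _ Kf).
    by exists Q1, P1; split => //; rewrite invf_div.
have : S a.
  case: xgen => _ _ _ /(_ S hS); apply => //.
  - move=> b bK; apply/pbP; exists b, 1; split; rewrite ?divr1 ?oner_neq0 //; first exact: lpK.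
    by apply: lpK; exact: (@sf1 _ _ Kf).
  - move=> i; apply/pbP; exists (x i), 1; split; rewrite ?divr1 ?oner_neq0 //.
      by rewrite -xm_delta -[xm _]mul1r; apply: lp_mon; exact: (@sf1 _ _ Kf).
    by apply: lpK; exact: (@sf1 _ _ Kf).
by move/pbP.
Qed.


Definition diag g := forall j, exists2 c, c \in K & act g (x j) = c * x j.

Lemma diag_rho {g} : g \in G -> diag g -> rho_rel K x act g 1%:M.
Proof.
move=> Hg hd j; have [c cK hc] := hd j; exists c; last by rewrite -xm_col col1 xm_delta.
rewrite cK /=; apply/eqP => c0; move: hc; rewrite c0 mul0r => /eqP.
by rewrite act_eq0 // (negPf (x_neq0 j)).
Qed.

Lemma diag_xm {g} w : g \in G -> diag g ->
  exists2 c, (c \in K) && (c != 0) & act g (xm w) = c * xm w.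
Proof. by move=> Hg hd; have [c hc ->] := act_xm _ _ w Hg (diag_rho Hg hd); exists c; rewrite // mul1mx. Qed.

Definition Nset : {set gT} := [set g in G | pb (diag g)].

Lemma Ngroup_set : group_set Nset.
Proof.
apply/group_setP; split.
  rewrite inE group1 /=; apply/pbP => j; exists 1; rewrite ?mul1r ?act1 //; exact: (@sf1 _ _ Kf).
move=> g h; rewrite !inE => /andP [Hg /pbP dg] /andP [Hh /pbP dh].
rewrite groupM //=; apply/pbP => j; have [c cK hc] := dh j; have [c' c'K hc'] := dg j.
exists (act g c * c'); first by apply: sfM => //; apply: actK_in.
by rewrite actM // hc; have [f Ef] := actP Hg; rewrite Ef rmorphM -Ef hc' mulrA.
Qed.

Definition Ngrp : {group gT} := Group Ngroup_set.

Lemma inN g : (g \in Ngrp) = (g \in G) && pb (diag g).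
Proof. by rewrite inE. Qed.

Lemma NG {g} : g \in Ngrp -> g \in G.
Proof. by rewrite inN => /andP []. Qed.

Lemma Ndiag {g} : g \in Ngrp -> diag g.
Proof. by rewrite inN => /andP [_ /pbP]. Qed.

Lemma NJ g h : g \in G -> h \in Ngrp -> (h ^ g)%g \in Ngrp.
Proof.
move=> Hg hN; have Hh := NG hN; rewrite inN groupJ //=; apply/pbP => j.
have [A _ hA] := act_rho Hg; have [c /andP [cK c0] hc] := hA j.
have [chi /andP [chiK _] hchi] := diag_xm (col j A) Hh (Ndiag hN).
exists (act g^-1%g (act h c * chi / c)).
  apply: actK_in; first by rewrite groupV.
  by apply: sfdiv => //; apply: sfM => //; apply: actK_in.
rewrite /conjg !actM ?groupM ?groupV // hc -xm_col.
have [f Ef] := actP Hh; rewrite Ef rmorphM -Ef hchi.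
have -> : act h c * (chi * xm (col j A)) = (act h c * chi / c) * (c * xm (col j A)).
  by field.
rewrite xm_col -hc; have [f' Ef'] := actP (groupVr Hg); rewrite Ef' rmorphM -Ef' actK //.
Qed.

Lemma N_normal : (Ngrp <| G)%g.
Proof.
apply/normalP; split; first by apply/subsetP => g; apply: NG.
move=> g Hg; apply/eqP; rewrite eqEcard cardJg leqnn andbT; apply/subsetP => h.
by rewrite mem_conjg => /(NJ _ _ Hg); rewrite conjgKV.
Qed.


Definition LN := fixed_field Ngrp act.

Lemma inLN a : reflect (forall g, g \in Ngrp -> act g a = a) (a \in LN).
Proof.
rewrite inE; apply: (iffP forall_inP) => h g hg; first by apply/eqP; apply: h.
by apply/eqP; apply: h.
Qed.

Lemma LN_sub : is_subfield LN.
Proof.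
split.
- by apply/inLN => g hg; have [f ->] := actP (NG hg); rewrite rmorph1.
- move=> a b /inLN ha /inLN hb; apply/inLN => g hg.
  by have [f Ef] := actP (NG hg); rewrite Ef rmorphB -Ef ha ?hb.
- move=> a b /inLN ha /inLN hb; apply/inLN => g hg.
  by have [f Ef] := actP (NG hg); rewrite Ef rmorphM -Ef ha ?hb.
- move=> a /inLN ha; apply/inLN => g hg.
  by have [f Ef] := actP (NG hg); rewrite Ef fmorphV -Ef ha.
Qed.

Lemma norm_LN w : \prod_(g in Ngrp) act g w \in LN.
Proof.
apply/inLN => h hN; have [f Ef] := actP (NG hN); rewrite Ef rmorph_prod -Ef.
rewrite [RHS](reindex_inj (mulgI h)) /=; apply: eq_big => g.
  by symmetry; exact: (groupMl g hN).
by move=> gN; rewrite actM // NG.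
Qed.

Lemma fchoice (A B : Type) (R : A -> B -> Prop) :
  (forall a, exists b, R a b) -> exists f : A -> B, forall a, R a (f a).
Proof.
move=> h; exists (fun a => proj1_sig (constructive_indefinite_description _ (h a))).
by move=> a; exact: (proj2_sig (constructive_indefinite_description _ (h a))).
Qed.

Lemma lp_LN v : lp v -> v \in LN -> exists t (C : 'cV[int]_n -> L),
  [/\ uniq t, forall e, C e \in K, forall e, e \in t -> C e * xm e \in LN
    & v = \sum_(e <- t) C e * xm e].
Proof.
move=> hv vN; have [t [C [ut CK Ev]]] := lp_uniq _ hv; exists t, C; split => //.
move=> e et; apply/inLN => h hN; have Hh := NG hN.
have [chi hchi] : exists chi : 'cV[int]_n -> L, forall w,
    (chi w \in K) /\ act h (xm w) = chi w * xm w.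
  apply: (@fchoice 'cV[int]_n L (fun w c => (c \in K) /\ act h (xm w) = c * xm w)) => w; have [c /andP [cK _] hc] := diag_xm w Hh (Ndiag hN).
  by exists c.
have [f Ef] := actP Hh.
have H0 : \sum_(e <- t) (act h (C e) * chi e - C e) * xm e = 0.
  have := inLN _ vN h hN; rewrite {1}Ev Ef rmorph_sum -Ef => E1.
  rewrite (eq_bigr (fun e => act h (C e * xm e) - C e * xm e)); last first.
    by move=> w _; rewrite Ef rmorphM -Ef (proj2 (hchi w)) mulrBl mulrA.
  by rewrite sumrB E1 -Ev subrr.
have hK : forall w, w \in t -> act h (C w) * chi w - C w \in K.
  by move=> w _; apply: sfB => //; apply: sfM => //; [apply: actK_in | apply: (proj1 (hchi w))].
have h1 := @LI _ t id _ ut (fun _ _ _ _ E => E) hK H0 e et.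
rewrite Ef rmorphM -Ef (proj2 (hchi e)) mulrA.
have -> // : act h (C e) * chi e = C e.
by apply/eqP; rewrite -subr_eq0; apply/eqP.
Qed.


Definition M (w : 'cV[int]_n) := exists2 p, (p \in K) && (p != 0) & p * xm w \in LN.

Lemma xmZ (z : int) u : xm (z *: u) = xm u ^ z.
Proof. by rewrite /xm prodXz; apply: eq_bigr => i _; rewrite mxE exprz_exp [z * _]mulrC. Qed.

Lemma MB u v : M u -> M v -> M (u - v).
Proof.
move=> [p /andP [pK p0] hu] [q /andP [qK q0] hv]; exists (p / q).
  by rewrite sfdiv //= mulf_neq0 ?invr_eq0.
have -> : p / q * xm (u - v) = (p * xm u) / (q * xm v).
  by rewrite xmB; field; rewrite q0 xm_neq0.
exact: (@sfdiv _ _ LN_sub).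
Qed.

Lemma MZ (z : int) u : M u -> M (z *: u).
Proof.
move=> [p /andP [pK p0] hu]; exists (p ^ z); first by rewrite sfXz //= expfz_neq0.
by rewrite xmZ -expfzMl; apply: (@sfXz _ _ LN_sub).
Qed.

Lemma Mnorm j : M ((#|Ngrp|%:Z) *: delta_mx j 0).
Proof.
have : forall g, exists c, g \in Ngrp -> ((c \in K) && (c != 0)) && (act g (x j) == c * x j).
  move=> g; case: (boolP (g \in Ngrp)) => gN; last by exists 0.
  have [c hc E] := diag_xm (delta_mx j 0) (NG gN) (Ndiag gN).
  by exists c => _; rewrite hc /= -xm_delta E.
case/fin_all_exists => cf hcf.
exists (\prod_(g in Ngrp) cf g).
  apply/andP; split.
    by apply: sf_prod => // g gN; case/andP: (hcf g gN) => /andP [].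
  by rewrite prodf_seq_neq0; apply/allP => g _; apply/implyP => gN; case/andP: (hcf g gN) => /andP [].
rewrite xmZ xm_delta.
have -> : x j ^ (#|Ngrp|%:Z) = \prod_(g in Ngrp) x j by rewrite prodr_const.
rewrite -big_split /=; rewrite (eq_bigr (fun g => act g (x j))); first exact: norm_LN.
by move=> g gN; case/andP: (hcf g gN) => _ /eqP ->.
Qed.


Lemma basis_ex : exists b : 'I_n -> 'cV[int]_n, forall j,
  [/\ M (b j), forall i : 'I_n, (i < j)%N -> b j i 0 = 0, 0 < b j j 0 &
     forall v, M v -> (forall i : 'I_n, (i < j)%N -> v i 0 = 0) -> 0 < v j 0 -> b j j 0 <= v j 0].
Proof.
suff h : forall j : 'I_n, exists bj : 'cV[int]_n,
  [/\ M bj, forall i : 'I_n, (i < j)%N -> bj i 0 = 0, 0 < bj j 0 &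
     forall v, M v -> (forall i : 'I_n, (i < j)%N -> v i 0 = 0) -> 0 < v j 0 -> bj j 0 <= v j 0].
  by have [b hb] := fin_all_exists h; exists b.
move=> j; pose P d := (0 < d)%N /\ exists v, [/\ M v, forall i : 'I_n, (i < j)%N -> v i 0 = 0 & v j 0 = d%:Z].
have [d [[d0 [v [Mv vz vd]]] dmin]] : exists d, P d /\ forall d', P d' -> (d <= d')%N.
  apply: ex_min_nat; exists #|Ngrp|; split; first exact: cardG_gt0.
  exists (#|Ngrp|%:Z *: delta_mx j 0); split; first exact: Mnorm.
    move=> i hi; rewrite !mxE; case: eqP => [E|_]; last by rewrite mulr0.
    by move: hi; rewrite E ltnn.
  by rewrite !mxE !eqxx mulr1.
exists v; split => //; first by rewrite vd; lia.
move=> v' Mv' v'z v'pos; rewrite vd.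
have : P (absz (v' j 0)) by split; [lia | exists v'; split => //; lia].
by move/dmin => h; lia.
Qed.

Lemma Bm_ex : exists Bm : 'M[int]_n,
  [/\ \det Bm != 0, forall j, M (col j Bm) & forall v, M v -> exists kk, v = Bm *m kk].
Proof.
have [b hb] := basis_ex.
pose Bm : 'M[int]_n := \matrix_(i, j) b j i 0.
have colB : forall j, col j Bm = b j.
  by move=> j; apply/matrixP => i l; rewrite (ord1 l) !mxE.
exists Bm; split.
- rewrite det_trig; last first.
    by apply/is_trig_mxP => i j hij; case: (hb j) => _ h _ _; rewrite /Bm mxE h.
  by rewrite prodf_seq_neq0; apply/allP => j _; rewrite /Bm mxE; case: (hb j) => _ _ h _; rewrite gt_eqF.
- by move=> j; rewrite colB; case: (hb j).
suff H : forall r, (r <= n)%N -> forall v, M v ->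
    (forall i : 'I_n, (i < n - r)%N -> v i 0 = 0) -> exists kk, v = Bm *m kk.
  by move=> v Mv; apply: (H n (leqnn n) v Mv) => i; rewrite subnn.
elim=> [|r ih] hr v Mv vz.
  exists 0; rewrite mulmx0; apply/matrixP => i l; rewrite (ord1 l) mxE; apply: vz.
  by rewrite subn0.
have hj : (n - r.+1 < n)%N by lia.
pose j := Ordinal hj.
have [Mbj bjz bjpos bjmin] := hb j.
pose q := divz (v j 0) (b j j 0).
pose v' := v - q *: b j.
have Mv' : M v' by apply: MB => //; apply: MZ.
have v'z : forall i : 'I_n, (i < j)%N -> v' i 0 = 0.
  by move=> i hi; rewrite !mxE vz ?bjz ?mulr0 ?subrr //= (leq_trans hi) // leq_sub2l.
have v'j : v' j 0 = modz (v j 0) (b j j 0).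
  by rewrite !mxE {1}(divz_eq (v j 0) (b j j 0)) addrAC -/q subrr add0r.
have rz : v' j 0 = 0.
  have r0 : 0 <= v' j 0 by rewrite v'j modz_ge0 // gt_eqF.
  have rlt : v' j 0 < b j j 0 by rewrite v'j ltz_pmod.
  case: (ltrgt0P (v' j 0)) r0 rlt => // r0 _ rlt.
  by have := bjmin v' Mv' v'z r0; rewrite leNgt rlt.
have [kk Ek] : exists kk, v' = Bm *m kk.
  apply: ih => //; first by lia.
  move=> i hi; have [hi'|hi'] := ltnP i j; first exact: v'z.
  have -> : i = j by apply: val_inj => /=; move: hi hi' => /=; lia.
  exact: rz.
exists (kk + q *: delta_mx j 0).
by rewrite mulmxDr -scalemxAr -colE colB -Ek /v' subrK.
Qed.


Lemma detI1 (B : 'M[int]_n) (u v : 'cV[int]_n) : \det B != 0 -> B *m u = B *m v -> u = v.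
Proof.
move=> d0 E; have : \adj B *m (B *m u) = \adj B *m (B *m v) by rewrite E.
rewrite !mulmxA mul_adj_mx !mul_scalar_mx => E2; apply/matrixP => i j.
by have := congr1 (fun A : 'M_(n, 1) => A i j) E2; rewrite /= !mxE => /(mulfI d0).
Qed.

Lemma detI2 (B A : 'M[int]_n) : \det B != 0 -> A *m B = B -> A = 1%:M.
Proof.
move=> d0 E; have : A *m B *m \adj B = B *m \adj B by rewrite E.
rewrite -mulmxA mul_mx_adj mul_mx_scalar -scalemx1 => E2; apply/matrixP => i j.
have := congr1 (fun C : 'M_n => C i j) E2; rewrite /= !mxE -mulr_natr mul1r; exact: (mulfI d0).
Qed.

Lemma detI3 (B C A : 'M[int]_n) : \det B != 0 -> B *m C = A *m B -> \det C = \det A.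
Proof.
move=> d0 E; have := congr1 (fun D => \det D) E; rewrite /= !det_mulmx => E2.
by apply: (mulfI d0); rewrite E2 mulrC.
Qed.


Lemma main_res : exists N : {group gT}, (N <| G)%g /\
    let LN := fixed_field N act in
    let KN := [pred a | (a \in K) && (a \in LN)] in
    exists (y : 'I_n -> L) (a : 'I_n -> L) (e : 'I_n -> 'I_n -> int),
      [/\ gen_field KN y LN /\ alg_indep KN y,
          forall i, [/\ a i \in K, a i != 0 & y i = a i * \prod_(j < n) x j ^ e i j],
          (pqm_action k K predT G [set 1%g] act x -> forall i, a i = 1),
          qm_action k KN LN G N act y &
          forall g h (A : 'M[int]_n), g \in G -> h \in G ->
            rho_rel KN y act g A -> rho_rel KN y act h A -> (g * h^-1)%g \in N].
Proof.
exists Ngrp; split; first exact: N_normal.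
move=> LN0 KN0; rewrite /LN0 /KN0; change (fixed_field Ngrp act) with LN.
pose KN := [pred b | (b \in K) && (b \in LN)].
have [Bm [dB MBm span]] := Bm_ex.
have hai : forall i, exists ai : L, [/\ ai \in K, ai != 0,
    ai * xm (col i Bm) \in LN & (xm (col i Bm) \in LN -> ai = 1)].
  move=> i; case: (boolP (xm (col i Bm) \in LN)) => hin.
    by exists 1; split; rewrite ?mul1r ?oner_neq0 //; exact: (@sf1 _ _ Kf).
  have [p /andP [pK p0] hp] := MBm i.
  by exists p; split => // /negP.
have [a ha] := fin_all_exists hai.
pose y i := a i * xm (col i Bm).
have yLN : forall i, y i \in LN by move=> i; case: (ha i).
pose alpha (kk : 'cV[int]_n) := \prod_(i < n) a i ^ kk i 0.
have alphaK : forall kk, alpha kk \in K.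
  by move=> kk; apply: sf_prod => // i _; apply: sfXz => //; case: (ha i).
have alpha0 : forall kk, alpha kk != 0.
  by move=> kk; rewrite prodf_seq_neq0; apply/allP => i _; rewrite expfz_neq0 //; case: (ha i).
have ymon : forall kk : 'cV[int]_n, \prod_(i < n) y i ^ kk i 0 = alpha kk * xm (Bm *m kk).
  by move=> kk; rewrite xm_mul -big_split /=; apply: eq_bigr => i _; rewrite expfzMl.
have ymonLN : forall kk : 'cV[int]_n, \prod_(i < n) y i ^ kk i 0 \in LN.
  by move=> kk; apply: (@sf_prod _ _ LN_sub) => i _; apply: (@sfXz _ _ LN_sub).
have Mon : forall P : pred L, is_subfield P -> sub_pred KN P -> (forall i, y i \in P) ->
    forall c w, c \in K -> c * xm w \in LN -> c * xm w \in P.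
  move=> P hP hKN hy c w cK cw.
  have [->|c0] := eqVneq c 0; first by rewrite mul0r; exact: (@sf0 _ _ hP).
  have [kk Ek] := span w (ex_intro2 _ _ c (introT andP (conj cK c0)) cw).
  have -> : c * xm w = (c / alpha kk) * \prod_(i < n) y i ^ kk i 0.
    by rewrite ymon -Ek; field; rewrite alpha0.
  apply: (@sfM _ _ hP); last by apply: (@sf_prod _ _ hP) => i _; apply: (@sfXz _ _ hP).
  apply: hKN; rewrite inE; apply/andP; split; first exact: sfdiv.
  have -> : c / alpha kk = (c * xm w) / \prod_(i < n) y i ^ kk i 0.
    by rewrite ymon -Ek; field; rewrite alpha0 xm_neq0.
  exact: (@sfdiv _ _ LN_sub).
have Inv : forall P : pred L, is_subfield P -> sub_pred KN P -> (forall i, y i \in P) ->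
    forall v, lp v -> v \in LN -> v \in P.
  move=> P hP hKN hy v hv vN; have [t [C [ut CK CN ->]]] := lp_LN _ hv vN.
  rewrite big_seq; apply: (@sf_sum _ _ hP) => e et; apply: Mon => //; exact: CN.
have L2 : forall g, g \in G -> (forall j, exists2 d, d \in K & act g (y j) = d * y j) ->
    g \in Ngrp.
  move=> g Hg hd; have [Ag _ hAg] := act_rho Hg.
  have E : forall j, col j (Ag *m Bm) = col j Bm.
    move=> j; have [d dK Ed] := hd j; have [c /andP [cK c0] Ec] := act_xm _ _ (col j Bm) Hg hAg.
    have [f Ef] := actP Hg; move: Ed; rewrite /y Ef rmorphM -Ef Ec mulrA [d * _]mulrA => Ed.
    have := mon_uniq _ _ _ _ _ _ _ Ed; rewrite colE -mulmxA -colE.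
    case => //; first by apply: sfM => //; apply: actK_in => //; case: (ha j).
      by apply: sfM => //; case: (ha j).
    by rewrite mulf_neq0 // act_eq0 //; case: (ha j).
  have AB : Ag *m Bm = Bm.
    apply/matrixP => i j.
    by have := congr1 (fun v : 'cV_n => v i 0) (E j); rewrite /= !mxE.
  have A1 := @detI2 Bm Ag dB AB.
  rewrite inN Hg; apply/pbP => j; have [c /andP [cK _] hc] := hAg j.
  by exists c; rewrite // hc -xm_col A1 col1 xm_delta.
have GLN : forall g b, g \in G -> b \in LN -> act g b \in LN.
  move=> g b Hg /inLN hb; apply/inLN => h hN.
  have hG := NG hN; rewrite -actM // conjgC actM ?groupJ // hb //; exact: NJ.
exists y, a, (fun i j => Bm j i); split.
- split.
  + split.
    * exact: LN_sub.
    * by move=> b /andP [].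
    * exact: yLN.
    * move=> P hP hKN hy b bN.
      have [P0 [Q0 [hP0 hQ0 Q00 Eb]]] := frac_all b.
      pose Qn := \prod_(g in Ngrp) act g Q0.
      pose R := \prod_(g in Ngrp | g != 1%g) act g Q0.
      have hQn : Qn = Q0 * R.
        rewrite /Qn (bigD1 1%g) //=; last exact: (group1 Ngrp).
        by have := act1 Q0; rewrite /oneg => ->.
      have R0 : R != 0.
        rewrite prodf_seq_neq0; apply/allP => g _; apply/implyP => /andP [gN _].
        by rewrite act_eq0 ?(NG gN).
      have lpQn : lp Qn by rewrite /Qn; apply: lp_prod => g gN; apply: lp_act => //; exact: NG.
      have QnN : Qn \in LN by exact: norm_LN.
      have Qn0 : Qn != 0 by rewrite hQn mulf_neq0.
      have lpP' : lp (P0 * R).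
        by apply: lpM => //; rewrite /R; apply: lp_prod => g /andP [gN _]; apply: lp_act => //; exact: NG.
      have EP : b * Qn = P0 * R by rewrite hQn Eb; field; rewrite Q00.
      have PN : P0 * R \in LN by rewrite -EP; apply: (@sfM _ _ LN_sub).
      have -> : b = (P0 * R) / Qn by rewrite -EP mulfK.
      apply: (@sfdiv _ _ hP).
        by apply: (Inv P hP hKN hy).
      by apply: (Inv P hP hKN hy).
  + move=> s c us hc hs e0 he0.
    pose ecol (f : {ffun 'I_n -> nat}) : 'cV[int]_n := \col_i ((f i)%:Z).
    have Ey : forall f : {ffun 'I_n -> nat},
        \prod_(i < n) y i ^+ f i = alpha (ecol f) * xm (Bm *m ecol f).
      by move=> f; rewrite -ymon; apply: eq_bigr => i _; rewrite mxE.
    have iphi : {in s &, injective (fun f => Bm *m ecol f)}.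
      move=> f1 f2 _ _ /(@detI1 Bm _ _ dB) E; apply/ffunP => i.
      by move/(congr1 (fun v : 'cV_n => v i 0)): E; rewrite !mxE => [[]].
    have hK : forall f, f \in s -> c f * alpha (ecol f) \in K.
      by move=> f hf; apply: sfM => //; have := hc f hf; case/andP.
    have hs' : \sum_(f <- s) c f * alpha (ecol f) * xm (Bm *m ecol f) = 0.
      rewrite (eq_bigr (fun f => c f * \prod_(i < n) y i ^+ f i)) ?hs // => f _; by rewrite Ey mulrA.
    have := @LI _ s (fun f => Bm *m ecol f) (fun f => c f * alpha (ecol f)) us iphi hK hs' e0 he0.
    by move/eqP; rewrite mulf_eq0 (negPf (alpha0 _)) orbF => /eqP.
- by move=> i; case: (ha i) => h1 h2 _ _; split => //; rewrite /y xm_col.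
- case=> _ hp i; case: (ha i) => _ _ _ -> //; apply/inLN => g gN.
  have hx : forall j, act g (x j) = x j.
    move=> j; have [A _ hA] := hp g (NG gN); have [c cK hc] := Ndiag gN j.
    have := hA j; rewrite hc -xm_col -[xm (col j A)]mul1r -xm_delta => E.
    have [_ E1] := mon_uniq _ _ _ _ (@sf1 _ _ Kf) cK (oner_neq0 L) (esym E).
    by rewrite -E1 mul1r.
  have [f Ef] := actP (NG gN); rewrite /xm Ef rmorph_prod; apply: eq_bigr => j _.
  by rewrite fmorphXz -Ef hx.
- split.
  + by move=> g b Hg bN; exact: GLN.
  + move=> g Hg hfix; apply: L2 => // j; exists 1; first exact: (@sf1 _ _ Kf).
    by rewrite mul1r; apply: hfix.
  + move=> g Hg b /andP [bK bN]; apply/andP; split; first exact: actK_in.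
    exact: GLN.
  + by move=> b /andP [bK _]; case: Hqm => _ _ _ h _; apply: (h b bK).
  + move=> g Hg; have [Ag Au hAg] := act_rho Hg; have [f Ef] := actP Hg.
    have hw : forall j, exists kk : 'cV[int]_n, Ag *m col j Bm = Bm *m kk.
      move=> j; apply: span; have [c /andP [cK c0] Ec] := act_xm _ _ (col j Bm) Hg hAg.
      exists (act g (a j) * c).
        rewrite sfM //= ?actK_in //; last by case: (ha j).
        by rewrite mulf_neq0 // act_eq0 //; case: (ha j).
      by have := GLN g (y j) Hg (yLN j); rewrite /y Ef rmorphM -Ef Ec mulrA.
    have [kk hkk] := fin_all_exists hw.
    pose Cg : 'M[int]_n := \matrix_(i, j) kk j i 0.
    have BC : Bm *m Cg = Ag *m Bm.
      have colC : forall j, col j Cg = kk j.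
        by move=> j; apply/matrixP => i l; rewrite (ord1 l) !mxE.
      have E : forall j, col j (Bm *m Cg) = col j (Ag *m Bm).
        by move=> j; rewrite !colE -!mulmxA -!colE colC hkk.
      apply/matrixP => i j.
      by have := congr1 (fun v : 'cV_n => v i 0) (E j); rewrite /= !mxE.
    exists Cg; first by rewrite unitmxE (@detI3 Bm Cg Ag dB BC) -unitmxE.
    move=> j; have [c /andP [cK c0] Ec] := act_xm _ _ (col j Bm) Hg hAg.
    pose p := act g (a j) * c.
    have pK : p \in K by rewrite sfM ?actK_in //; case: (ha j).
    have p0 : p != 0 by rewrite mulf_neq0 // act_eq0 //; case: (ha j).
    have Eyj : act g (y j) = p * xm (Ag *m col j Bm) by rewrite /y Ef rmorphM -Ef Ec mulrA.
    have Yc : \prod_(i < n) y i ^ Cg i j = alpha (kk j) * xm (Ag *m col j Bm).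
      have -> : \prod_(i < n) y i ^ Cg i j = \prod_(i < n) y i ^ kk j i 0.
        by apply: eq_bigr => i _; rewrite mxE.
      by rewrite ymon -hkk.
    exists (p / alpha (kk j)); last by rewrite Eyj Yc; field; rewrite alpha0.
    apply/andP; split; last by rewrite mulf_neq0 // invr_eq0 alpha0.
    apply/andP; split; first exact: sfdiv.
    have -> : p / alpha (kk j) = act g (y j) / \prod_(i < n) y i ^ Cg i j.
      by rewrite Eyj Yc; field; rewrite alpha0 xm_neq0.
    apply: (@sfdiv _ _ LN_sub); first exact: GLN.
    by apply: (@sf_prod _ _ LN_sub) => i _; apply: (@sfXz _ _ LN_sub).
- move=> g h A Hg Hh hg hh.
  have Hu : (h^-1 * g)%g \in Ngrp.
    apply: L2; first by rewrite groupM ?groupV.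
    move=> j; have [c /andP [/andP [cK _] _] Ec] := hg j.
    have [c' /andP [/andP [c'K _] c'0] Ec'] := hh j.
    exists (act h^-1%g (c / c')); first by apply: actK_in; [rewrite groupV | exact: sfdiv].
    rewrite actM ?groupV // Ec.
    have -> : c * \prod_(i < n) y i ^ A i j = (c / c') * act h (y j).
      by rewrite Ec'; field; rewrite c'0.
    by have [f Ef] := actP (groupVr Hh); rewrite Ef rmorphM -Ef actK.
  by have := NJ _ _ (groupVr Hh) Hu; rewrite /conjg invgK !mulgA mulgV mul1g.
Qed.

End Main.

Theorem proposition1p12 (L : fieldType) (k K : pred L) (n : nat)
    (x : 'I_n -> L) (gT : finGroupType) (G : {group gT})
    (act : gT -> L -> L) :
  is_subfield k -> is_subfield K -> finite_ext k K ->
  alg_indep K x -> gen_field K x predT ->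
  kaut_action k G act ->
  qm_action k K predT G [set 1%g] act x ->
  exists N : {group gT}, (N <| G)%g /\
    let LN := fixed_field N act in
    let KN := [pred a | (a \in K) && (a \in LN)] in
    exists (y : 'I_n -> L) (a : 'I_n -> L) (e : 'I_n -> 'I_n -> int),
      [/\ gen_field KN y LN /\ alg_indep KN y,
          forall i, [/\ a i \in K, a i != 0 & y i = a i * \prod_(j < n) x j ^ e i j],
          (pqm_action k K predT G [set 1%g] act x -> forall i, a i = 1),
          qm_action k KN LN G N act y &
          forall g h (A : 'M[int]_n), g \in G -> h \in G ->
            rho_rel KN y act g A -> rho_rel KN y act h A -> (g * h^-1)%g \in N].
Proof.
move=> kf Kf fe xind xgen Hact Hqm.
exact: (@main_res L k K n x gT G act Kf xind xgen Hact Hqm).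
Qed.
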